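(* Let $m,n$ be positive integers and $x>2$ real. Define $\alpha_j>0$ ($1\le j\le 2n-1$) and $\beta_k>0$ ($1\le k\le 2m-1$) by $$\cosh\alpha_j+\cos\frac{\pi j}{2n}=x=\cosh\beta_k+\cos\frac{\pi k}{2m}.$$ Then $$\prod_{j=1}^{2n-1}\left(\frac{\tanh(m\alpha_j)}{\sinh\alpha_j}\right)^{(-1)^j}=\prod_{k=1}^{2m-1}\left(\frac{\tanh(n\beta_k)}{\sinh\beta_k}\right)^{(-1)^k}.$$ *)

(* Defs.v *)
From Stdlib Require Import Reals.
Open Scope R_scope.

Fixpoint prod1 (N : nat) (f : nat -> R) : R :=
  match N with
  | O => 1
  | S p => prod1 p f * f (S p)
  end.

Definition sgnZ (j : nat) : Z := if Nat.even j then 1%Z else (-1)%Z.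

(* Main.v *)
Require Import Defs.
From Stdlib Require Import Reals Lra Lia.
From mathcomp Require ssreflect ssrfun ssrbool eqtype ssrnat seq ssralg poly Rstruct.
Open Scope R_scope.
Module Cheb.
Import ssreflect ssrfun ssrbool eqtype ssrnat seq ssralg poly Rstruct.
Import GRing.Theory.
Local Open Scope ring_scope.
Fixpoint chebrec (p0 p1 : {poly R}) (k:nat) : {poly R} * {poly R} :=
  match k with O => (p0,p1) | S k => let (a,b) := chebrec p0 p1 k in (b, (IZR 2) *: (b * 'X) - a) end.

Lemma cheb_eval p0 p1 (y : R) (f : nat -> R) :
  (forall k, f k.+2 = (2 * (f k.+1 * y) - f k)%R) -> p0.[y] = f 0%N -> p1.[y] = f 1%N ->
  forall k, ((chebrec p0 p1 k).1).[y] = f k /\ ((chebrec p0 p1 k).2).[y] = f k.+1.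
Proof.
move=> Hf H0 H1; elim=> [|k [IH1 IH2]] /=; first by split.
case E: (chebrec p0 p1 k) => [a b] /=; rewrite E /= in IH1 IH2. split=> //.
by rewrite hornerD hornerN hornerZ hornerMX IH1 IH2 Hf.
Qed.

Lemma two_neq0 : (IZR 2 : R) != 0.
Proof. apply/eqP; change (IZR 2 <> IZR 0); lra. Qed.

Lemma cheb_size (p0 p1 : {poly R}) : size p0 = 1%N -> size p1 = 2%N -> forall k,
  [/\ size (chebrec p0 p1 k).1 = k.+1, size (chebrec p0 p1 k).2 = k.+2 &
      lead_coef (chebrec p0 p1 k).2 = lead_coef p1 * (IZR 2) ^+ k].
Proof.
move=> H0 H1; elim=> [|k [IH1 IH2 IH3]] /=; first by rewrite expr0 mulr1.
case E: (chebrec p0 p1 k) => [a b] /=; rewrite E /= in IH1 IH2 IH3.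
have bn0 : b != 0 by rewrite -size_poly_eq0 IH2.
have Hs : size (IZR 2 *: (b * 'X)) = k.+3 by rewrite size_scale ?two_neq0 // size_mulX // IH2.
have Hlt : (size (- a) < size (IZR 2 *: (b * 'X)))%N by rewrite size_opp Hs IH1 ltnS leqW.
split=> //; first by rewrite size_addl.
by rewrite lead_coefDl // lead_coefZ lead_coefMX IH3 exprS mulrCA.
Qed.

Lemma poly_fact d : forall (p : {poly R}) (r : nat -> R), size p = d.+1 ->
  (forall i j, ((1 <= i)%coq_nat /\ (i <= d)%coq_nat) -> ((1 <= j)%coq_nat /\ (j <= d)%coq_nat) -> r i = r j -> i = j) ->
  (forall i, ((1 <= i)%coq_nat /\ (i <= d)%coq_nat) -> p.[r i] = 0) ->
  forall y, p.[y] = lead_coef p * prod1 d (fun i => y - r i).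
Proof.
elim: d => [|d IH] p r Hs Hinj Hr y.
  have Hp : p = (lead_coef p)%:P by rewrite [LHS]size1_polyC ?Hs // lead_coefE Hs.
  by rewrite {1}Hp hornerC /= mulr1.
have : root p (r d.+1) by apply/eqP; apply Hr; lia.
case/factor_theorem => q Hpq.
have pn0 : p != 0 by rewrite -size_poly_eq0 Hs.
have qn0 : q != 0 by apply: contraNneq pn0 => q0; rewrite Hpq q0 mul0r.
have Hsq : size q = d.+1.
  move: Hs; rewrite Hpq size_mul ?polyXsubC_eq0 // size_XsubC addn2 /=.
  by case.
have Hl : lead_coef p = lead_coef q by rewrite Hpq lead_coefM lead_coefXsubC mulr1.
have Hrq : forall i, ((1 <= i)%coq_nat /\ (i <= d)%coq_nat) -> q.[r i] = 0.
  move=> i Hi; have := Hr i ltac:(lia); rewrite Hpq hornerM hornerXsubC => /eqP.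
  rewrite mulf_eq0 subr_eq0 => /orP [/eqP //|/eqP E].
  have := Hinj i d.+1 ltac:(lia) ltac:(lia) E; lia.
rewrite Hl Hpq hornerM hornerXsubC (IH q r Hsq) //; last first.
  by move=> i j Hi Hj; apply: Hinj; lia.
exact: Rmult_assoc.
Qed.

Definition T (m : nat) : {poly R} := (chebrec 1 'X m).1.
Definition U (m : nat) : {poly R} := (chebrec 1 (IZR 2 *: 'X) m).1.

Lemma T_eval (y : R) (f : nat -> R) :
  (forall k, f k.+2 = Rminus (Rmult (IZR 2) (Rmult (f k.+1) y)) (f k)) ->
  f 0%N = R1 -> f 1%N = y -> forall m, horner (T m) y = f m.
Proof.
move=> Hf H0 H1 m; rewrite /T; case: (cheb_eval 1 ('X) y f Hf _ _ m) => //.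
  by rewrite hornerC H0.
by rewrite hornerX H1.
Qed.

Lemma U_eval (y : R) (f : nat -> R) :
  (forall k, f k.+2 = Rminus (Rmult (IZR 2) (Rmult (f k.+1) y)) (f k)) ->
  f 0%N = R1 -> f 1%N = Rmult (IZR 2) y -> forall m, horner (U m) y = f m.
Proof.
move=> Hf H0 H1 m; rewrite /U; case: (cheb_eval 1 (IZR 2 *: 'X) y f Hf _ _ m) => //.
  by rewrite hornerC H0.
by rewrite hornerZ hornerX H1.
Qed.

Lemma size_X2 : size (IZR 2 *: ('X : {poly R})) = 2%N.
Proof. by rewrite size_scale ?two_neq0 // size_polyX. Qed.

Lemma T_size m : size (T m) = m.+1.
Proof. by case: (cheb_size 1 ('X) (size_poly1 _) (size_polyX _) m). Qed.

Lemma U_size m : size (U m) = m.+1.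
Proof. by case: (cheb_size 1 (IZR 2 *: 'X) (size_poly1 _) size_X2 m). Qed.

Lemma lead_TU k : lead_coef (T k.+1) = lead_coef (U k) /\ lead_coef (U k) <> R0.
Proof.
have Hl : lead_coef (U k) = IZR 2 ^+ k.
  case: k => [|k]; first by rewrite /U /= lead_coef1 expr0.
  rewrite /U /=.
  case: (cheb_size 1 (IZR 2 *: 'X) (size_poly1 _) size_X2 k) => _ _.
  case: (chebrec _ _ k) => a b /= ->.
  by rewrite lead_coefZ lead_coefX mulr1 exprS.
split; last first.
  by rewrite Hl; apply/eqP; rewrite expf_eq0 negb_and two_neq0 orbT.
rewrite Hl /T /=.
case: (cheb_size 1 ('X) (size_poly1 _) (size_polyX _) k) => _ _.
by case: (chebrec _ _ k) => a b /= ->; rewrite lead_coefX mul1r.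
Qed.

End Cheb.

Lemma prod1_S N f : prod1 (S N) f = prod1 N f * f (S N).
Proof. reflexivity. Qed.

Lemma prod1_ext N f g : (forall i, (1 <= i <= N)%nat -> f i = g i) -> prod1 N f = prod1 N g.
Proof.
  induction N; intros H; [reflexivity|].
  rewrite !prod1_S, IHN, H; [reflexivity|lia|].
  intros i Hi; apply H; lia.
Qed.

Lemma prod1_mul N f g : prod1 N (fun i => f i * g i) = prod1 N f * prod1 N g.
Proof. induction N; simpl; [ring|]. rewrite IHN; ring. Qed.

Lemma prod1_swap N M (F : nat -> nat -> R) :
  prod1 N (fun j => prod1 M (fun k => F j k)) = prod1 M (fun k => prod1 N (fun j => F j k)).
Proof.
  induction N; simpl.
  - induction M; simpl; [reflexivity|rewrite <- IHM; ring].
  - rewrite IHN, <- prod1_mul; reflexivity.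
Qed.

Lemma powerRZ_p1 a : powerRZ a 1 = a.
Proof. simpl; ring. Qed.
Lemma powerRZ_m1 a : powerRZ a (-1) = / a.
Proof. simpl; rewrite Rmult_1_r; reflexivity. Qed.

Lemma sgnZ_cases j : sgnZ j = 1%Z \/ sgnZ j = (-1)%Z.
Proof. unfold sgnZ; destruct (Nat.even j); auto. Qed.

Lemma prod1_pow N f j :
  powerRZ (prod1 N f) (sgnZ j) = prod1 N (fun k => powerRZ (f k) (sgnZ j)).
Proof.
  destruct (sgnZ_cases j) as [E|E]; rewrite E.
  - rewrite powerRZ_p1; apply prod1_ext; intros; rewrite powerRZ_p1; reflexivity.
  - rewrite (prod1_ext N (fun k => powerRZ (f k) (-1)) (fun k => / f k)) by (intros; apply powerRZ_m1).
    rewrite powerRZ_m1; induction N; simpl prod1; [apply Rinv_1|].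
    rewrite Rinv_mult, IHN; reflexivity.
Qed.

Lemma powerRZ_comm a j k :
  powerRZ (powerRZ a (sgnZ k)) (sgnZ j) = powerRZ (powerRZ a (sgnZ j)) (sgnZ k).
Proof.
  destruct (sgnZ_cases j) as [E|E]; destruct (sgnZ_cases k) as [F|F]; rewrite E, F;
  rewrite ?powerRZ_p1, ?powerRZ_m1; reflexivity.
Qed.

Lemma sgnZ_even i : sgnZ (2 * i) = 1%Z.
Proof. unfold sgnZ; rewrite Nat.even_mul; reflexivity. Qed.

Lemma sgnZ_odd i : (1 <= i)%nat -> sgnZ (2 * i - 1) = (-1)%Z.
Proof.
  intros H; replace (2 * i - 1)%nat with (S (2 * (i - 1))) by lia.
  unfold sgnZ; rewrite Nat.even_succ, Nat.odd_mul; reflexivity.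
Qed.

Lemma split_prod p (g : nat -> R) :
  prod1 (2 * S p - 1) (fun k => powerRZ (g k) (sgnZ k))
  = prod1 p (fun i => g (2 * i)%nat) * / prod1 (S p) (fun i => g (2 * i - 1)%nat).
Proof.
  induction p.
  - simpl. rewrite !Rmult_1_r, !Rmult_1_l; reflexivity.
  - replace (2 * S (S p) - 1)%nat with (S (S (2 * S p - 1))) by lia.
    rewrite !prod1_S, IHp.
    replace (S (S (2 * S p - 1))) with (2 * S (S p) - 1)%nat by lia.
    replace (S (2 * S p - 1)) with (2 * S p)%nat by lia.
    rewrite sgnZ_even, sgnZ_odd by lia.
    rewrite powerRZ_p1, powerRZ_m1, !prod1_S, !Rinv_mult. ring.
Qed.

Lemma ch_rec c a : cosh (c + a) + cosh (c - a) = 2 * (cosh c * cosh a).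
Proof.
  unfold cosh.
  replace (- (c + a)) with (- c + - a) by ring.
  replace (c - a) with (c + - a) by ring.
  replace (- (c + - a)) with (- c + a) by ring.
  rewrite !exp_plus; field.
Qed.

Lemma sh_rec c a : sinh (c + a) + sinh (c - a) = 2 * (sinh c * cosh a).
Proof.
  unfold sinh, cosh.
  replace (- (c + a)) with (- c + - a) by ring.
  replace (c - a) with (c + - a) by ring.
  replace (- (c + - a)) with (- c + a) by ring.
  rewrite !exp_plus; field.
Qed.

Lemma sinh_pos a : 0 < a -> 0 < sinh a.
Proof.
  intros H; unfold sinh.
  assert (exp (- a) < exp a) by (apply exp_increasing; lra). lra.
Qed.

Lemma cosh_pos a : 0 < cosh a.
Proof. unfold cosh. pose proof (exp_pos a); pose proof (exp_pos (- a)). lra. Qed.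

Lemma INR_SS_split k a :
  INR (S (S k)) * a = INR (S k) * a + a /\ INR k * a = INR (S k) * a - a.
Proof. rewrite !S_INR; split; ring. Qed.

Lemma T_cosh m a : poly.horner (Cheb.T m) (cosh a) = cosh (INR m * a).
Proof.
  apply (Cheb.T_eval (cosh a) (fun k => cosh (INR k * a))).
  - intros k; destruct (INR_SS_split k a) as [E1 E2].
    rewrite E1, E2. pose proof (ch_rec (INR (S k) * a) a). lra.
  - simpl; rewrite Rmult_0_l; apply cosh_0.
  - simpl; rewrite Rmult_1_l; reflexivity.
Qed.

Lemma U_sinh p a : 0 < a ->
  poly.horner (Cheb.U p) (cosh a) = sinh (INR (S p) * a) / sinh a.
Proof.
  intros Ha. pose proof (sinh_pos a Ha).
  apply (Cheb.U_eval (cosh a) (fun k => sinh (INR (S k) * a) / sinh a)).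
  - intros k; destruct (INR_SS_split (S k) a) as [E1 E2].
    rewrite E1, E2. pose proof (sh_rec (INR (S (S k)) * a) a) as H1.
    assert (sinh (INR (S (S k)) * a + a) = 2 * (sinh (INR (S (S k)) * a) * cosh a) - sinh (INR (S (S k)) * a - a)) as H2 by lra.
    rewrite H2. field. lra.
  - simpl; rewrite Rmult_1_l; field; lra.
  - replace (INR 2 * a) with (a + a) by (simpl; ring).
    pose proof (sh_rec a a). replace (a - a) with 0 in H0 by ring.
    replace (sinh 0) with 0 in H0 by (unfold sinh; rewrite Ropp_0; field).
    rewrite (Rplus_0_r) in H0. rewrite H0. simpl. field; lra.
Qed.

Lemma T_cos m t : poly.horner (Cheb.T m) (cos t) = cos (INR m * t).
Proof.
  apply (Cheb.T_eval (cos t) (fun k => cos (INR k * t))).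
  - intros k; destruct (INR_SS_split k t) as [E1 E2].
    rewrite E1, E2, cos_plus, cos_minus. ring.
  - simpl; rewrite Rmult_0_l; apply cos_0.
  - simpl; rewrite Rmult_1_l; reflexivity.
Qed.

Lemma U_sin p t : sin t <> 0 ->
  poly.horner (Cheb.U p) (cos t) = sin (INR (S p) * t) / sin t.
Proof.
  intros Ht.
  apply (Cheb.U_eval (cos t) (fun k => sin (INR (S k) * t) / sin t)).
  - intros k; destruct (INR_SS_split (S k) t) as [E1 E2].
    rewrite E1, E2, sin_plus, sin_minus. field; auto.
  - simpl; rewrite Rmult_1_l; field; auto.
  - replace (INR 2 * t) with (t + t) by (simpl; ring).
    rewrite sin_plus. simpl. field; auto.
Qed.

Lemma INR2 : INR 2 = 2.
Proof. simpl; ring. Qed.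

Lemma ang_bounds m k : (0 < m)%nat -> (1 <= k <= 2 * m - 1)%nat ->
  0 < PI * INR k / (2 * INR m) < PI.
Proof.
  intros Hm Hk.
  assert (HK : 1 <= INR k) by (rewrite <- INR_1; apply le_INR; lia).
  assert (HKM : INR k + 1 <= 2 * INR m).
  { rewrite <- INR_1, <- INR2, <- mult_INR, <- plus_INR. apply le_INR; lia. }
  pose proof PI_RGT_0.
  assert (HM : 0 < INR m) by (apply lt_0_INR; lia).
  set (t := / (2 * INR m)).
  assert (Ht : 0 < t) by (apply Rinv_0_lt_compat; lra).
  assert (Ht2 : 2 * INR m * t = 1) by (unfold t; field; lra).
  unfold Rdiv; fold t.
  assert (Hkt : INR k * t < 1).
  { rewrite <- Ht2. apply Rmult_lt_compat_r; lra. }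
  assert (0 < INR k * t) by (apply Rmult_lt_0_compat; lra).
  rewrite Rmult_assoc. split; [apply Rmult_lt_0_compat; lra|].
  rewrite <- (Rmult_1_r PI) at 2. apply Rmult_lt_compat_l; lra.
Qed.

Lemma ang_inj m k l : (0 < m)%nat -> (1 <= k <= 2 * m - 1)%nat -> (1 <= l <= 2 * m - 1)%nat ->
  cos (PI * INR k / (2 * INR m)) = cos (PI * INR l / (2 * INR m)) -> k = l.
Proof.
  intros Hm Hk Hl E.
  pose proof (ang_bounds m k Hm Hk); pose proof (ang_bounds m l Hm Hl).
  apply cos_inj in E; [|lra|lra].
  pose proof PI_RGT_0.
  assert (HM : 0 < INR m) by (apply lt_0_INR; lia).
  apply INR_eq.
  apply Rmult_eq_reg_l with (PI / (2 * INR m)).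
  - replace (PI / (2 * INR m) * INR k) with (PI * INR k / (2 * INR m)) by (field; lra).
    replace (PI / (2 * INR m) * INR l) with (PI * INR l / (2 * INR m)) by (field; lra).
    exact E.
  - apply Rgt_not_eq, Rdiv_lt_0_compat; lra.
Qed.

Lemma keyK m a : (0 < m)%nat -> 0 < a ->
  tanh (INR m * a) / sinh a =
  prod1 (2 * m - 1) (fun k => powerRZ (cosh a - cos (PI * INR k / (2 * INR m))) (sgnZ k)).
Proof.
  intros Hm Ha. destruct m as [|p]; [lia|].
  pose proof (sinh_pos a Ha) as Hsh.
  pose proof (cosh_pos (INR (S p) * a)) as Hch.
  assert (HM : 0 < INR (S p)) by (apply lt_0_INR; lia).
  pose proof PI_RGT_0.
  rewrite (split_prod p (fun k => cosh a - cos (PI * INR k / (2 * INR (S p))))).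
  assert (HUf : poly.horner (Cheb.U p) (cosh a) = poly.lead_coef (Cheb.U p) *
     prod1 p (fun i => cosh a - cos (PI * INR (2 * i) / (2 * INR (S p))))).
  { apply Cheb.poly_fact; [apply Cheb.U_size| |].
    - intros i j Hi Hj E. apply (ang_inj (S p) (2 * i) (2 * j)) in E; lia.
    - intros i Hi. pose proof (ang_bounds (S p) (2 * i) ltac:(lia) ltac:(lia)) as Hb.
      assert (Hs : sin (PI * INR (2 * i) / (2 * INR (S p))) <> 0)
        by (apply Rgt_not_eq, sin_gt_0; lra).
      rewrite U_sin by exact Hs.
      rewrite sin_eq_0_1. unfold Rdiv; apply Rmult_0_l.
      exists (Z.of_nat i). rewrite <- INR_IZR_INZ, mult_INR, INR2. field; lra. }
  assert (HTf : poly.horner (Cheb.T (S p)) (cosh a) = poly.lead_coef (Cheb.T (S p)) *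
     prod1 (S p) (fun i => cosh a - cos (PI * INR (2 * i - 1) / (2 * INR (S p))))).
  { apply Cheb.poly_fact; [apply Cheb.T_size| |].
    - intros i j Hi Hj E. apply (ang_inj (S p) (2 * i - 1) (2 * j - 1)) in E; lia.
    - intros i Hi. rewrite T_cos.
      apply cos_eq_0_1. exists (Z.of_nat (i - 1)).
      rewrite <- INR_IZR_INZ, !minus_INR, mult_INR, INR2, INR_1 by lia. field; lra. }
  rewrite U_sinh in HUf by exact Ha.
  rewrite T_cosh in HTf.
  destruct (Cheb.lead_TU p) as [HL HL0].
  rewrite HL in HTf.
  set (lU := poly.lead_coef (Cheb.U p)) in *.
  set (PE := prod1 p (fun i => cosh a - cos (PI * INR (2 * i) / (2 * INR (S p))))) in *.
  set (PO := prod1 (S p) (fun i => cosh a - cos (PI * INR (2 * i - 1) / (2 * INR (S p))))) in *.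
  unfold tanh.
  replace (sinh (INR (S p) * a) / cosh (INR (S p) * a) / sinh a)
    with ((sinh (INR (S p) * a) / sinh a) * / cosh (INR (S p) * a)) by (field; lra).
  rewrite HUf, HTf, Rinv_mult.
  replace (lU * PE * (/ lU * / PO)) with ((lU * / lU) * (PE * / PO)) by ring.
  rewrite Rinv_r by exact HL0. ring.
Qed.

Theorem mainTheorem14 (m n : nat) (x : R) (alpha beta : nat -> R) :
  (0 < m)%nat -> (0 < n)%nat -> 2 < x ->
  (forall j, (1 <= j <= 2 * n - 1)%nat ->
     0 < alpha j /\ cosh (alpha j) + cos (PI * INR j / (2 * INR n)) = x) ->
  (forall k, (1 <= k <= 2 * m - 1)%nat ->
     0 < beta k /\ cosh (beta k) + cos (PI * INR k / (2 * INR m)) = x) ->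
  prod1 (2 * n - 1)
    (fun j => powerRZ (tanh (INR m * alpha j) / sinh (alpha j)) (sgnZ j))
  = prod1 (2 * m - 1)
    (fun k => powerRZ (tanh (INR n * beta k) / sinh (beta k)) (sgnZ k)).
Proof.
  intros Hm Hn Hx Ha Hb.
  set (cn := fun j => cos (PI * INR j / (2 * INR n))).
  set (cm := fun k => cos (PI * INR k / (2 * INR m))).
  rewrite (prod1_ext (2 * n - 1) _ (fun j => prod1 (2 * m - 1)
     (fun k => powerRZ (powerRZ (x - cn j - cm k) (sgnZ k)) (sgnZ j)))).
  2:{ intros j Hj. destruct (Ha j Hj) as [Hpos Heq].
      rewrite keyK by assumption. rewrite prod1_pow. apply prod1_ext.
      intros k Hk. replace (cosh (alpha j)) with (x - cn j) by (unfold cn; lra).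
      reflexivity. }
  rewrite (prod1_ext (2 * m - 1) _ (fun k => prod1 (2 * n - 1)
     (fun j => powerRZ (powerRZ (x - cn j - cm k) (sgnZ k)) (sgnZ j)))).
  2:{ intros k Hk. destruct (Hb k Hk) as [Hpos Heq].
      rewrite keyK by assumption. rewrite prod1_pow. apply prod1_ext.
      intros j Hj. rewrite powerRZ_comm.
      replace (cosh (beta k) - cos (PI * INR j / (2 * INR n))) with (x - cn j - cm k)
        by (unfold cn, cm in *; lra).
      reflexivity. }
  apply prod1_swap.
Qed.
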